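(* Let $n\ge1$, $u,v\in\mathfrak{S}_n$ and $J,K\subseteq[n-1]$. Then: (i) if $u\le v$ then $u_J\le v_J$; and if $K\subseteq J$ then $u_K\ge u_J$; (ii) $u_J\wedge v_K=(u\wedge v)_{J\cup K}$; (iii) if $J\subseteq\mathrm{GDes}(v)$ and $K\subseteq\mathrm{GDes}(u)$, then $u_J\vee v_K=(u\vee v)_{J\cap K}$.
   Context: Permutations in one-line notation. For a sequence $(a_1,\ldots,a_m)$ of distinct integers, $\mathrm{st}(a_1,\ldots,a_m)\in\mathfrak{S}_m$ is the unique permutation $x$ with $x_i<x_j\iff a_i<a_j$. For $x\in\mathfrak{S}_a,y\in\mathfrak{S}_b$, $x\times y\in\mathfrak{S}_{a+b}$ has $(x\times y)(i)=x_i$ for $i\le a$ and $(x\times y)(a+j)=a+y_j$. For $u\in\mathfrak{S}_n$ and $J=\{p_1<\cdots<p_k\}\subseteq[n-1]$, $u_J=\mathrm{st}(u_1,\ldots,u_{p_1})\times\mathrm{st}(u_{p_1+1},\ldots,u_{p_2})\times\cdots\times\mathrm{st}(u_{p_k+1},\ldots,u_n)$, and $u_\emptyset=u$. Weak order: $u\le v$ iff $\mathrm{Inv}(u)\subseteq\mathrm{Inv}(v)$, $\mathrm{Inv}(u)=\{(i,j):i<j,u_i>u_j\}$; it is a lattice with meet $\wedge$ and join $\vee$. $\mathrm{GDes}(u)$ is the set of $p\in[n-1]$ with $u_i>u_j$ for all $i\le p<j$. *)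

(* Defs.v *)
(* Permutations of {1..n} are 'S_n = {perm 'I_n}, with the
   0-based convention: the one-line entry u_{i+1} is (u i : nat) + 1. *)
From mathcomp Require Import all_boot fingroup perm.
Set Implicit Arguments. Unset Strict Implicit. Unset Printing Implicit Defensive.

Section Defs.
Variable n : nat.

Definition Inv (u : 'S_n) : {set 'I_n * 'I_n} :=
  [set ij : 'I_n * 'I_n | (ij.1 < ij.2) && (u ij.2 < u ij.1)].

Definition weak_le (u v : 'S_n) : bool := Inv u \subset Inv v.

Definition is_meet (u v w : 'S_n) : bool :=
  [&& weak_le w u, weak_le w v &
      [forall z : 'S_n, (weak_le z u && weak_le z v) ==> weak_le z w]].
Definition is_join (u v w : 'S_n) : bool :=
  [&& weak_le u w, weak_le v w &
      [forall z : 'S_n, (weak_le u z && weak_le v z) ==> weak_le w z]].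

(* The meet and join of the weak-order lattice (the pick always succeeds,
   since the weak order on 'S_n is a lattice; 1 is a dummy default). *)
Definition meet (u v : 'S_n) : 'S_n := odflt 1%g [pick w | is_meet u v w].
Definition join (u v : 'S_n) : 'S_n := odflt 1%g [pick w | is_join u v w].

(* Global descents: a cut position p (1 <= p <= n-1, i.e. cutting after the
   first p entries) such that every entry left of the cut exceeds every entry
   right of it.  0-based: for all i < p <= j, u i > u j. *)
Definition GDes (u : 'S_n) : {set 'I_n} :=
  [set p : 'I_n | (0 < p) &&
     [forall i : 'I_n, forall j : 'I_n, ((i < p) && (p <= j)) ==> (u j < u i)]].

(* A cut set J (elements p, 1 <= p <= n-1) splits positions 0..n-1 into
   consecutive blocks; cut p separates positions p-1 and p. *)
Definition same_block (J : {set 'I_n}) (i j : 'I_n) : bool :=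
  [forall p in J, ~~ ((minn i j < p) && (p <= maxn i j))].

Definition blk_start (J : {set 'I_n}) (i : 'I_n) : nat :=
  \max_(p in J | p <= i) (p : nat).

(* u_J = st(block 1) x st(block 2) x ... : position i is sent to the start of
   its block plus the rank of u i among the values of u on its block. *)
Definition parab_fun (J : {set 'I_n}) (u : 'S_n) (i : 'I_n) : 'I_n :=
  insubd i (blk_start J i + #|[set j : 'I_n | same_block J i j & u j < u i]|).

(* insubd i: the value is always < n; the default i is never used. *)
(* turn a function into a permutation (it is always injective here;
   the fallback 1 is never used). *)
Definition mkperm (f : 'I_n -> 'I_n) : 'S_n :=
  (if injectiveb f as b return (injectiveb f = b -> 'S_n)
   then fun H => perm (injectiveP f H) else fun _ => 1%g) (erefl _).

Definition parab (J : {set 'I_n}) (u : 'S_n) : 'S_n := mkperm (parab_fun J u).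

End Defs.

(* Main.v *)
Require Import Defs.
From mathcomp Require Import all_boot fingroup perm.
From mathcomp Require Import zify.
Set Implicit Arguments. Unset Strict Implicit. Unset Printing Implicit Defensive.

Section P.
Variable n : nat.
Implicit Types (X J K : {set 'I_n}) (u v w z : 'S_n).

Lemma sbP X (i j : 'I_n) :
  reflect (forall p : 'I_n, p \in X -> ~~ ((minn i j < p) && (p <= maxn i j)))
          (same_block X i j).
Proof. exact: forall_inP. Qed.

Lemma sbPn X (i j : 'I_n) :
  reflect (exists2 p : 'I_n, p \in X & (minn i j < p) && (p <= maxn i j))
          (~~ same_block X i j).
Proof.
apply: (iffP forall_inPn) => -[p pX H]; exists p => //; by move: H; rewrite negbK.
Qed.

Lemma sb_refl X i : same_block X i i.
Proof. apply/sbP => p _; apply/negP => /andP[h1 h2]; lia. Qed.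

Lemma sb_sym X i j : same_block X i j = same_block X j i.
Proof. by rewrite /same_block minnC maxnC. Qed.

Lemma sb_trans X i j k : same_block X i j -> same_block X j k -> same_block X i k.
Proof.
move=> /sbP H1 /sbP H2; apply/sbP => p pX.
apply/negP => /andP[a b]; move: (H1 p pX) (H2 p pX); rewrite !negb_and -!ltnNge => /orP[] c /orP[] d; lia.
Qed.

Lemma sb_sub X (i j a b : 'I_n) : i <= a -> a <= b -> b <= j ->
  same_block X i j -> same_block X a b.
Proof.
move=> h1 h2 h3 /sbP H; apply/sbP => p pX; move: (H p pX).
rewrite !negb_and -!ltnNge => /orP[] c; apply/orP; lia.
Qed.

Lemma sb_cross X (i j p : 'I_n) : p \in X -> i < p -> p <= j -> ~~ same_block X i j.
Proof. move=> pX h1 h2; apply/sbPn; exists p => //; apply/andP; split; lia. Qed.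

Lemma sb_crossP X (i j : 'I_n) : i <= j -> ~~ same_block X i j ->
  exists2 p : 'I_n, p \in X & (i < p) && (p <= j).
Proof.
move=> ij /sbPn[p pX H]; exists p => //; move: H.
have -> : minn i j = i by lia. by have -> : maxn i j = j by lia.
Qed.

Lemma sbU J K i j : same_block (J :|: K) i j = same_block J i j && same_block K i j.
Proof.
apply/sbP/andP => [H|[/sbP H1 /sbP H2]].
  by split; apply/sbP => p pX; apply: H; rewrite inE pX ?orbT.
by move=> p; rewrite inE => /orP[] pX; [apply: H1 | apply: H2].
Qed.

Lemma sbS J K i j : K \subset J -> same_block J i j -> same_block K i j.
Proof. by move=> /subsetP KJ /sbP H; apply/sbP => p /KJ; apply: H. Qed.

Lemma bs_le X (i k : 'I_n) : same_block X i k -> blk_start X i <= k.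
Proof.
move=> /sbP H; apply/bigmax_leqP => p /andP[pX pi].
move: (H p pX); case: (leqP p k) => // kp; case/negP; apply/andP; split; lia.
Qed.

Lemma bs_eq X (i j : 'I_n) : same_block X i j -> blk_start X i = blk_start X j.
Proof.
move=> /sbP H; apply: eq_bigl => p; case pX: (p \in X) => //=.
move: (H p pX); case: (leqP p i); case: (leqP p j) => //= *; lia.
Qed.

Lemma bs_ge X (i p : 'I_n) : p \in X -> p <= i -> p <= blk_start X i.
Proof. move=> pX pi; rewrite /blk_start; apply: (@leq_bigmax_cond _ _ (fun q : 'I_n => (q:nat)) p); by rewrite pX. Qed.

Lemma card_interval (A : {set 'I_n}) b c :
  (forall k : 'I_n, k \in A -> b <= k < c) -> #|A| <= c - b.
Proof.
move=> H; rewrite cardE -(size_map val) -(size_iota b (c - b)).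
apply: uniq_leq_size; first by rewrite map_inj_uniq ?enum_uniq //; exact: val_inj.
move=> x /mapP[k]; rewrite mem_enum => /H/andP[h1 h2] ->; rewrite mem_iota /=; apply/andP; split; lia.
Qed.

Definition Fv X u (i : 'I_n) : nat :=
  blk_start X i + #|[set j : 'I_n | same_block X i j & u j < u i]|.

Lemma Fv_lt X u (i : 'I_n) c : (forall k : 'I_n, same_block X i k -> k < c) ->
  i < c -> Fv X u i < c.
Proof.
move=> H ic; rewrite /Fv.
set A := [set j : 'I_n | _ & _].
have iA : i \notin A by rewrite inE ltnn andbF.
have : #|i |: A| <= c - blk_start X i.
  apply: card_interval => k; rewrite !inE => /orP[/eqP->|/andP[sk _]].
    by rewrite ic andbT (bs_le (sb_refl _ _)).
  by rewrite (bs_le sk) H.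
rewrite cardsU1 iA /=. have := bs_le (sb_refl X i). lia.
Qed.

Lemma Fv_ltn X u (i : 'I_n) : Fv X u i < n.
Proof. by apply: Fv_lt. Qed.

Lemma Fv_same X u (i j : 'I_n) : same_block X i j -> u i < u j -> Fv X u i < Fv X u j.
Proof.
move=> sij uij; rewrite /Fv (bs_eq sij) ltn_add2l; apply: proper_card.
apply/properP; split.
  apply/subsetP => k; rewrite !inE => /andP[sik uk]; apply/andP; split.
    by apply: sb_trans sik; rewrite sb_sym.
  exact: ltn_trans uk uij.
by exists i; rewrite !inE ?ltnn ?andbF // sb_sym sij uij.
Qed.

Lemma Fv_cross X u (i j : 'I_n) : i < j -> ~~ same_block X i j -> Fv X u i < Fv X u j.
Proof.
move=> ij /(sb_crossP (ltnW ij))[p pX /andP[ip pj]].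
apply: (@leq_trans p); last by rewrite /Fv; apply: leq_trans (bs_ge pX pj) (leq_addr _ _).
apply: Fv_lt => // k sik; rewrite ltnNge; apply/negP => pk.
case: (leqP i k) => ik.
  by move/negP: (sb_cross pX ip pk).
move: sik; rewrite sb_sym => /(sb_sub (leqnn k) (ltnW ik) (leqnn i)) _; lia.
Qed.

Lemma Fv_inj X u : injective (parab_fun X u).
Proof.
have E : forall i, val (parab_fun X u i) = Fv X u i.
  by move=> i; rewrite val_insubd Fv_ltn.
have key : forall i j : 'I_n, i < j -> Fv X u i != Fv X u j.
  move=> i j ij; case s: (same_block X i j).
    case: (ltngtP (u i) (u j)) => h.
    - by rewrite neq_ltn (Fv_same s h).
    - by rewrite neq_ltn (Fv_same _ h) ?orbT // sb_sym.
    - by move/ord_inj/perm_inj: h => h; move: ij; rewrite h ltnn.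
  by rewrite neq_ltn Fv_cross ?s.
move=> i j /(congr1 val); rewrite !E => e; apply/eqP; apply: contraT => ne.
case: (ltngtP i j) => h.
- by move: (key _ _ h); rewrite e eqxx.
- by move: (key _ _ h); rewrite e eqxx.
- by move: ne; rewrite (val_inj h) eqxx.
Qed.

Lemma mkpermE (f : 'I_n -> 'I_n) : injective f -> mkperm f =1 f.
Proof.
move=> fi; rewrite /mkperm; move: (erefl (injectiveb f)).
case: {2 3}(injectiveb f) => H x; first by rewrite permE.
by move: H; have /injectiveP -> := fi.
Qed.

Definition invr u (i j : 'I_n) : bool := (i < j) && (u j < u i).

Lemma weak_leP u v : reflect (forall i j, invr u i j -> invr v i j) (weak_le u v).
Proof.
apply: (iffP subsetP) => H.
  by move=> i j h; have := H (i, j); rewrite !inE; apply.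
by move=> [i j]; rewrite !inE; apply: H.
Qed.

Lemma inv_parab X u i j : invr (parab X u) i j = invr u i j && same_block X i j.
Proof.
rewrite /invr /parab !mkpermE; last exact: Fv_inj.
rewrite !val_insubd !Fv_ltn.
case: (ltnP i j) => //= ij; case s: (same_block X i j).
  case: (ltngtP (u i) (u j)) => h.
  - by rewrite ltnNge ltnW ?(Fv_same s h) // andbT.
  - by rewrite (Fv_same _ h) // sb_sym.
  - by move/ord_inj/perm_inj: h => h; move: ij; rewrite h ltnn.
by rewrite andbF ltnNge ltnW // Fv_cross ?s.
exact: Fv_inj.
Qed.


Definition isIS (s : rel 'I_n) :=
  [/\ forall i j, s i j -> i < j,
      forall i j k, s i j -> s j k -> s i k &
      forall i j k : 'I_n, i < j -> j < k -> s i k -> s i j || s j k].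

Lemma invr_IS u : isIS (invr u).
Proof.
rewrite /invr; split.
- by move=> i j /andP[].
- move=> i j k /andP[a b] /andP[c d]; apply/andP; split; lia.
- move=> i j k a b /andP[c d]; case e: (u j < u i); first by rewrite a.
  rewrite b /=; move/negbT: e; rewrite -leqNgt => e; lia.
Qed.

Section Realize.
Variable s : rel 'I_n.
Hypothesis sIS : isIS s.

Definition rlt (i j : 'I_n) : bool :=
  if i < j then ~~ s i j else if j < i then s j i else false.

Lemma rlt_irr i : rlt i i = false.
Proof. by rewrite /rlt ltnn. Qed.

Lemma rlt_total i j : i != j -> rlt i j || rlt j i.
Proof.
move=> ne; rewrite /rlt; case: (ltngtP i j) => h.
- by case: (s i j).
- by case: (s j i).
- by move: ne; rewrite (val_inj h) eqxx.
Qed.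

Lemma rlt_trans i j k : rlt i j -> rlt j k -> rlt i k.
Proof.
case: sIS => S T C.
rewrite /rlt; case: (ltngtP i j) => ij; case: (ltngtP j k) => jk; case: (ltngtP i k) => ik //=.
all: try lia.
- move=> /negPf a /negPf b; apply/negP => /(C _ _ _ ij jk); by rewrite a b.
- move=> /negPf a b; apply/negP => c; by rewrite (T _ _ _ c b) in a.
- move=> /negPf a b; by move: (C _ _ _ ik ij b); rewrite a orbF.
- move/val_inj: ik => ik; subst k; move=> /negPf a b; by rewrite b in a.
- move=> a /negPf b; apply/negP => c; by rewrite (T _ _ _ a c) in b.
- move=> a /negPf b; by move: (C _ _ _ jk ik a); rewrite b.
- move/val_inj: ik => ik; subst k; move=> a /negPf b; by rewrite a in b.
- move=> a b; exact: T _ _ _ b a.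
Qed.

Definition rk (i : 'I_n) : nat := #|[set k | rlt k i]|.

Lemma rk_lt i : rk i < n.
Proof.
rewrite /rk; have := @proper_card _ [set k | rlt k i] [set: 'I_n].
rewrite cardsT card_ord; apply; apply/properP; split.
  exact: subsetT.
by exists i; rewrite ?inE ?rlt_irr.
Qed.

Lemma rk_mono i j : rlt i j -> rk i < rk j.
Proof.
move=> ij; apply: proper_card; apply/properP; split.
  by apply/subsetP => k; rewrite !inE => /rlt_trans; apply.
by exists i; rewrite !inE ?rlt_irr.
Qed.

Lemma rk_inj : injective (fun i => Ordinal (rk_lt i)).
Proof.
move=> i j /(congr1 val) /= e; apply/eqP; apply: contraT => ne.
by case/orP: (rlt_total ne) => /rk_mono; rewrite e ltnn.
Qed.

Lemma realize : exists w : 'S_n, invr w =2 s.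
Proof.
case: sIS => S T C.
exists (perm rk_inj) => i j; rewrite /invr !permE /=.
case: (ltnP i j) => ij /=; last first.
  by apply/esym/negP => /S; rewrite ltnNge ij.
case sij: (s i j).
  by apply: rk_mono; rewrite /rlt ltnNge (ltnW ij) /= ij.
apply/negbTE; rewrite -leqNgt; apply: ltnW; apply: rk_mono.
by rewrite /rlt ij sij.
Qed.

End Realize.

Section Closure.
Variables a b : rel 'I_n.
Hypotheses (aIS : isIS a) (bIS : isIS b).
Definition ce : rel 'I_n := fun i j => a i j || b i j.
Definition clo : rel 'I_n := fun i j => (i < j) && connect ce i j.

Lemma ce_lt i j : ce i j -> i < j.
Proof. by case: aIS bIS => Sa _ _ [Sb _ _] /orP[/Sa|/Sb]. Qed.

Lemma clo_min (Z : rel 'I_n) : (forall i j, ce i j -> Z i j) ->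
  (forall i j k, Z i j -> Z j k -> Z i k) -> forall i j, clo i j -> Z i j.
Proof.
move=> ZE ZT.
have P : forall p i, path ce i p -> i = last i p \/ Z i (last i p).
  elim=> [|x p IH] i /=; first by left.
  case/andP=> eix /IH [<-|H]; right; first exact: ZE.
  exact: ZT (ZE _ _ eix) H.
move=> i j /andP[ij /connectP[p pth ejl]]; subst j; case: (P _ _ pth) => // e.
by move: ij; rewrite -e ltnn.
Qed.

Lemma clo_IS : isIS clo.
Proof.
case: aIS => Sa Ta Ca; case: bIS => Sb Tb Cb.
split.
- by move=> i j /andP[].
- move=> i j k /andP[ij c1] /andP[jk c2]; rewrite /clo (connect_trans c1 c2) andbT.
  exact: ltn_trans ij jk.
have P : forall p (i j : 'I_n), path ce i p -> i < j -> j < last i p ->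
    connect ce i j || connect ce j (last i p).
  elim=> [|x p IH] i j /=; first by move=> _ h1 /= h2; lia.
  case/andP=> eix pth ij jl.
  have cxl : connect ce x (last x p) by apply/connectP; exists p.
  case: (ltngtP j x) => jx.
  - case/orP: eix => e.
      case/orP: (Ca _ _ _ ij jx e) => h.
        by rewrite connect1 // /ce h.
      by rewrite (connect_trans (connect1 (_ : ce j x)) cxl) ?orbT // /ce h.
    case/orP: (Cb _ _ _ ij jx e) => h.
      by rewrite connect1 // /ce h orbT.
    by rewrite (connect_trans (connect1 (_ : ce j x)) cxl) ?orbT // /ce h orbT.
  - case/orP: (IH x j pth jx jl) => h; last by rewrite h orbT.
    by rewrite (connect_trans (connect1 eix) h).
  - by rewrite (val_inj jx) connect1.
move=> i j k ij jk /andP[ik /connectP[p pth kl]].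
rewrite /clo ij jk /= kl; apply: P pth ij _; by rewrite -kl.
Qed.

Lemma clo_sub_a i j : a i j -> clo i j.
Proof. move=> h; have e : ce i j by rewrite /ce h. by rewrite /clo connect1 // andbT (ce_lt e). Qed.

End Closure.

Lemma clo_sub_b (a b : rel 'I_n) i j : isIS a -> isIS b -> b i j -> clo a b i j.
Proof.
move=> aIS bIS h; have e : ce a b i j by rewrite /ce h orbT.
by rewrite /clo connect1 // andbT (ce_lt aIS bIS e).
Qed.

Definition compl (s : rel 'I_n) : rel 'I_n := fun i j => (i < j) && ~~ s i j.

Lemma compl_IS s : isIS s -> isIS (compl s).
Proof.
case=> S T C; rewrite /compl; split.
- by move=> i j /andP[].
- move=> i j k /andP[ij /negPf a] /andP[jk /negPf b].
  rewrite (ltn_trans ij jk); apply/negP => /(C _ _ _ ij jk); by rewrite a b.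
- move=> i j k ij jk /andP[ik nik]; rewrite ij jk /=.
  apply: contraR nik; rewrite negb_or !negbK => /andP[h1 h2]; exact: T h1 h2.
Qed.

Lemma card_lt m : m <= n -> #|[set k : 'I_n | k < m]| = m.
Proof.
move=> H; apply/eqP; rewrite eqn_leq; apply/andP; split.
  by have := @card_interval [set k : 'I_n | k < m] 0 m; rewrite subn0; apply => k; rewrite inE.
have inj : injective (widen_ord H) by move=> x y /(congr1 val) /= /val_inj.
have E := card_imset [set: 'I_m] inj; rewrite cardsT card_ord in E; rewrite -{1}E.
by apply: subset_leq_card; apply/subsetP => x /imsetP[k _ ->]; rewrite inE /= ltn_ord.
Qed.

Lemma perm_rank u i : #|[set j | u j < u i]| = u i.
Proof.
have -> : [set j | u j < u i] = u @^-1: [set k : 'I_n | k < u i].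
  by apply/setP => j; rewrite !inE.
by rewrite card_preimset ?card_lt //; [exact: ltnW | exact: perm_inj].
Qed.

Lemma invr_eq u v : invr u =2 invr v -> u = v.
Proof.
move=> E; apply/permP => i; apply: ord_inj; rewrite -perm_rank -(perm_rank v).
have -> : [set j | u j < u i] = [set j | v j < v i]; last done.
apply/setP => j; rewrite !inE.
case: (ltngtP i j) => ij.
- have := E i j; rewrite /invr ij /= => ->; done.
- have := E j i; rewrite /invr ij /= => e.
  move: e; case: (ltngtP (u i) (u j)) => h1; case: (ltngtP (v i) (v j)) => h2 //= _.
  all: try (by move: h1 => /ord_inj/perm_inj e'; move: ij; rewrite e' ltnn).
  all: try (by move: h2 => /ord_inj/perm_inj e'; move: ij; rewrite e' ltnn).
- by rewrite (val_inj ij) !ltnn.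
Qed.

Lemma weak_antisym u v : weak_le u v -> weak_le v u -> u = v.
Proof.
move=> /weak_leP h1 /weak_leP h2; apply: invr_eq => i j.
by apply/idP/idP => [/h1|/h2].
Qed.

Lemma join_exists u v : exists w, is_join u v w.
Proof.
have [w E] := realize (clo_IS (invr_IS u) (invr_IS v)).
exists w; apply/and3P; split.
- by apply/weak_leP => i j h; rewrite E clo_sub_a //; exact: invr_IS.
- by apply/weak_leP => i j h; rewrite E clo_sub_b //; exact: invr_IS.
apply/forallP => z; apply/implyP => /andP[/weak_leP h1 /weak_leP h2].
apply/weak_leP => i j; rewrite E; apply: clo_min.
- by move=> x y /orP[/h1|/h2].
- by case: (invr_IS z).
Qed.

Lemma meet_exists u v : exists w, is_meet u v w.
Proof.
have cu := compl_IS (invr_IS u); have cv := compl_IS (invr_IS v).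
have [w E] := realize (compl_IS (clo_IS cu cv)).
have Cv : forall i j, invr w i j = (i < j) && ~~ clo (compl (invr u)) (compl (invr v)) i j.
  exact: E.
exists w; apply/and3P; split.
- apply/weak_leP => i j; rewrite Cv => /andP[ij nc]; apply: contraR nc => h.
  by apply: clo_sub_a => //; rewrite /compl ij h.
- apply/weak_leP => i j; rewrite Cv => /andP[ij nc]; apply: contraR nc => h.
  by apply: clo_sub_b => //; rewrite /compl ij h.
apply/forallP => z; apply/implyP => /andP[/weak_leP h1 /weak_leP h2].
apply/weak_leP => i j hz; rewrite Cv.
have ij : i < j by case/andP: hz.
rewrite ij /=; apply/negP => /(clo_min (Z := compl (invr z))) H.
have : compl (invr z) i j.
  apply: H.
  - move=> x y /orP[] /andP[xy nx]; rewrite /compl xy /=; apply: contra nx; [exact: h1 | exact: h2].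
  - by case: (compl_IS (invr_IS z)).
by rewrite /compl hz andbF.
Qed.

Lemma join_spec u v w : is_join u v w -> join u v = w.
Proof.
move=> H; rewrite /join; case: pickP => [w' H'|/(_ w)]; last by rewrite H.
case/and3P: H => a b /forallP c; case/and3P: H' => a' b' /forallP c'.
apply: weak_antisym.
- by move/implyP: (c' w); apply; rewrite a b.
- by move/implyP: (c w'); apply; rewrite a' b'.
Qed.

Lemma meet_spec u v w : is_meet u v w -> meet u v = w.
Proof.
move=> H; rewrite /meet; case: pickP => [w' H'|/(_ w)]; last by rewrite H.
case/and3P: H => a b /forallP c; case/and3P: H' => a' b' /forallP c'.
apply: weak_antisym.
- by move/implyP: (c w'); apply; rewrite a' b'.
- by move/implyP: (c' w); apply; rewrite a b.
Qed.

Lemma gdesP v (p i j : 'I_n) : p \in GDes v -> i < p -> p <= j -> invr v i j.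
Proof.
rewrite inE => /andP[_ /forallP H] ip pj; move/forallP: (H i) => /(_ j) /implyP.
by rewrite ip pj /invr => /(_ isT) ->; rewrite (leq_trans ip pj).
Qed.

Section Join.
Variables (u v z : 'S_n) (J K : {set 'I_n}).
Hypotheses (GJ : J \subset GDes v) (GK : K \subset GDes u).
Hypothesis HZu : forall i j, invr u i j -> same_block J i j -> invr z i j.
Hypothesis HZv : forall i j, invr v i j -> same_block K i j -> invr z i j.

Lemma claim d : forall i j : 'I_n, j - i <= d -> i < j ->
  same_block (J :&: K) i j -> ~~ same_block (J :|: K) i j -> invr z i j.
Proof.
case: (invr_IS z) => _ Tz _.
elim: d => [|d IH] i j dij ij sI sU; first by lia.
rewrite sbU in sU.
case sK: (same_block K i j).
  rewrite sK andbT in sU.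
  have [p pJ /andP[ip pj]] := sb_crossP (ltnW ij) sU.
  apply: HZv sK; apply: gdesP ip pj; exact: (subsetP GJ).
case sJ: (same_block J i j).
  have [p pK /andP[ip pj]] := sb_crossP (ltnW ij) (negbT sK).
  apply: HZu sJ; apply: gdesP ip pj; exact: (subsetP GK).
have [p pJ /andP[ip pj]] := sb_crossP (ltnW ij) (negbT sJ).
have [q qK /andP[iq qj]] := sb_crossP (ltnW ij) (negbT sK).
have split2 : forall c1 c2 : 'I_n, c1 \in J :|: K -> c2 \in J :|: K ->
    i < c1 -> c1 < c2 -> c2 <= j -> invr z i j.
  move=> c1 c2 c1U c2U ic1 c12 c2j.
  have kn : c2.-1 < n by have := ltn_ord c2; lia.
  set k := Ordinal kn.
  have ik : i < k by rewrite /=; lia.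
  have kj : k < j by rewrite /=; lia.
  apply: (Tz _ k).
    apply: IH => //; first by rewrite /=; lia.
      by apply: sb_sub sI; rewrite /=; lia.
    by apply: (sb_cross c1U) => //=; lia.
  apply: IH => //; first by rewrite /=; lia.
    by apply: sb_sub sI; rewrite /=; lia.
  by apply: (sb_cross c2U) => //=; lia.
case: (ltngtP p q) => pq.
- by apply: (split2 p q) => //; rewrite inE ?pJ ?qK ?orbT.
- by apply: (split2 q p) => //; rewrite inE ?pJ ?qK ?orbT.
- move/ord_inj: pq => pq; subst q.
  by move: sI; rewrite (negbTE (sb_cross (_ : p \in J :&: K) ip pj)) // inE pJ qK.
Qed.

Definition Zp : rel 'I_n := fun i j => invr z i j || (i < j) && ~~ same_block (J :&: K) i j.

Lemma Zp_IS : isIS Zp.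
Proof.
case: (invr_IS z) => Sz Tz Cz; rewrite /Zp; split.
- by move=> i j /orP[/Sz|/andP[]].
- move=> i j k h1 h2.
  have ij : i < j by case/orP: h1 => [/Sz|/andP[]].
  have jk : j < k by case/orP: h2 => [/Sz|/andP[]].
  have ik := ltn_trans ij jk.
  case/orP: h1 => [a|/andP[_ a]]; last first.
    rewrite ik /=; apply/orP; right; apply: contra a; apply: sb_sub; lia.
  case/orP: h2 => [b|/andP[_ b]]; first by rewrite (Tz _ _ _ a b).
  rewrite ik /=; apply/orP; right; apply: contra b; apply: sb_sub; lia.
- move=> i j k ij jk /orP[h|/andP[ik h]].
    by case/orP: (Cz _ _ _ ij jk h) => ->; rewrite ?orbT.
  have [p pJK /andP[ip pk]] := sb_crossP (ltnW ik) h.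
  case: (leqP p j) => pj.
    by rewrite (sb_cross pJK ip pj) ij orbT.
  by rewrite (sb_cross pJK pj pk) jk !orbT.
Qed.

Lemma Zp_le_u : forall i j, invr u i j -> Zp i j.
Proof.
move=> i j h; have ij : i < j by case/andP: h.
rewrite /Zp; case sI: (same_block (J :&: K) i j); last by rewrite ij orbT.
case sU: (same_block (J :|: K) i j).
  by rewrite (HZu h) //; move: sU; rewrite sbU => /andP[].
by rewrite (claim (leqnn _) ij sI (negbT sU)).
Qed.

Lemma Zp_le_v : forall i j, invr v i j -> Zp i j.
Proof.
move=> i j h; have ij : i < j by case/andP: h.
rewrite /Zp; case sI: (same_block (J :&: K) i j); last by rewrite ij orbT.
case sU: (same_block (J :|: K) i j).
  by rewrite (HZv h) //; move: sU; rewrite sbU => /andP[].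
by rewrite (claim (leqnn _) ij sI (negbT sU)).
Qed.

End Join.

End P.

Theorem mainTheorem6 (n : nat) (u v : 'S_n) (J K : {set 'I_n}) :
  0 < n ->
  (forall p : 'I_n, p \in J -> 0 < p) ->
  (forall p : 'I_n, p \in K -> 0 < p) ->
  [/\ (weak_le u v -> weak_le (parab J u) (parab J v)),
      (K \subset J -> weak_le (parab J u) (parab K u)),
      meet (parab J u) (parab K v) = parab (J :|: K) (meet u v) &
      (J \subset GDes v -> K \subset GDes u ->
         join (parab J u) (parab K v) = parab (J :&: K) (join u v))].
Proof.
move=> _ _ _; split.
- move=> /weak_leP H; apply/weak_leP => i j; rewrite !inv_parab => /andP[h s].
  by rewrite H.
- move=> KJ; apply/weak_leP => i j; rewrite !inv_parab => /andP[h s].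
  by rewrite h (sbS KJ s).
- have [m Hm] := meet_exists u v; rewrite (meet_spec Hm); apply: meet_spec.
  case/and3P: Hm => /weak_leP m1 /weak_leP m2 /forallP m3.
  apply/and3P; split.
  + by apply/weak_leP => i j; rewrite !inv_parab sbU => /and3P[h sJ sK]; rewrite m1.
  + by apply/weak_leP => i j; rewrite !inv_parab sbU => /and3P[h sJ sK]; rewrite m2.
  apply/forallP => z; apply/implyP => /andP[/weak_leP z1 /weak_leP z2].
  have zu : weak_le z u.
    by apply/weak_leP => i j /z1; rewrite inv_parab => /andP[].
  have zv : weak_le z v.
    by apply/weak_leP => i j /z2; rewrite inv_parab => /andP[].
  move/implyP: (m3 z); rewrite zu zv => /(_ isT) /weak_leP zm.
  apply/weak_leP => i j h; rewrite inv_parab sbU (zm _ _ h).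
  move: (z1 _ _ h) (z2 _ _ h); rewrite !inv_parab => /andP[_ ->] /andP[_ ->].
  done.
- move=> GJ GK.
  have [N HN] := join_exists u v; rewrite (join_spec HN); apply: join_spec.
  case/and3P: HN => /weak_leP n1 /weak_leP n2 /forallP n3.
  have sI : forall (X Y : {set 'I_n}) i j, same_block X i j -> same_block (X :&: Y) i j.
    by move=> X Y i j; apply: sbS; exact: subsetIl.
  have sI' : forall (X Y : {set 'I_n}) i j, same_block Y i j -> same_block (X :&: Y) i j.
    by move=> X Y i j; apply: sbS; exact: subsetIr.
  apply/and3P; split.
  + by apply/weak_leP => i j; rewrite !inv_parab => /andP[h s]; rewrite n1 // sI.
  + by apply/weak_leP => i j; rewrite !inv_parab => /andP[h s]; rewrite n2 // sI'.
  apply/forallP => z; apply/implyP => /andP[/weak_leP z1 /weak_leP z2].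
  have HZu : forall i j, invr u i j -> same_block J i j -> invr z i j.
    by move=> i j h s; apply: z1; rewrite inv_parab h s.
  have HZv : forall i j, invr v i j -> same_block K i j -> invr z i j.
    by move=> i j h s; apply: z2; rewrite inv_parab h s.
  have [z' Ez'] := realize (Zp_IS z GJ GK).
  have uz' : weak_le u z'.
    by apply/weak_leP => i j h; rewrite Ez'; exact: (Zp_le_u GJ GK HZu HZv).
  have vz' : weak_le v z'.
    by apply/weak_leP => i j h; rewrite Ez'; exact: (Zp_le_v GJ GK HZu HZv).
  move/implyP: (n3 z'); rewrite uz' vz' => /(_ isT) /weak_leP Nz.
  apply/weak_leP => i j; rewrite inv_parab => /andP[h s].
  by move: (Nz _ _ h); rewrite Ez' /Zp s andbF orbF.
Qed.
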